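(* Let $A$ and $B$ be finite simple graphs, and fix $a \in V(A)$ and $b \in V(B)$. Let $D$ be the graph obtained from the disjoint union of $A$ and $B$ by identifying the vertices $a$ and $b$. If $A$ and $B$ both satisfy the bunkbed conjecture, then $D$ satisfies the bunkbed conjecture.
   Context: All graphs are finite and simple. For a graph $G$, a weight is a function $\mu\colon E(G)\to[0,1]$; the associated edge-percolation probability space has sample space $\Omega=\mathscr P(E(G))$ (all subsets of edges), with $\mathbb P_{G,\mu}(X)=\prod_{e\in X}\mu(e)\prod_{e\notin X}(1-\mu(e))$ for $X\subseteq E(G)$, i.e. each edge $e$ is independently open with probability $\mu(e)$. For $x,y\in V(G)$, $(x\sim y)$ (or $(x\sim_G y)$) is the event that $x$ and $y$ are joined by a path of open edges. The bunkbed graph $BB(G)=G\,\Box\, K_2$ has vertex set $V(G)\times\{0,1\}$, writing $x^-=(x,0)$, $x^+=(x,1)$, and edges $x^-y^-$ and $x^+y^+$ for every $xy\in E(G)$, plus the vertical edges $x^-x^+$ for every $x\in V(G)$. A weight $\mu$ on $BB(G)$ is symmetric if $\mu(x^-y^-)=\mu(x^+y^+)$ for every $xy\in E(G)$ (vertical edges may have arbitrary weights). A graph $G$ satisfies the bunkbed conjecture if for every symmetric weight $\mu$ on $BB(G)$ and all $x,y\in V(G)$, $\mathbb P_{BB(G),\mu}(x^-\sim y^-)\ge \mathbb P_{BB(G),\mu}(x^-\sim y^+)$. *)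

(* Defs.v *)
From HB Require Import structures.
From mathcomp Require Import all_boot all_order all_algebra.
From mathcomp Require Import reals.
Set Implicit Arguments. Unset Strict Implicit. Unset Printing Implicit Defensive.
Import Order.TTheory GRing.Theory Num.Theory.
Local Open Scope ring_scope.

Definition simple_graph (T : finType) (e : rel T) : Prop :=
  symmetric e /\ irreflexive e.

Definition edges (T : finType) (e : rel T) : {set {set T}} :=
  [set [set p.1; p.2] | p in [set p : T * T | e p.1 p.2]].

Definition joined (T : finType) (X : {set {set T}}) (x y : T) : bool :=
  connect (fun u v => [set u; v] \in X) x y.

Definition perc_prob (R : realType) (T : finType) (E : {set {set T}})
    (mu : {set T} -> R) (ev : pred {set {set T}}) : R :=
  \sum_(X in powerset E | ev X)
     ((\prod_(f in X) mu f) * (\prod_(f in E :\: X) (1 - mu f))).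

(* Bunkbed graph G box K_2: vertices T * bool, x^- = (x,false), x^+ = (x,true). *)
Definition bb_rel (T : finType) (e : rel T) : rel (T * bool) :=
  fun u v => ((u.2 == v.2) && e u.1 v.1) || ((u.1 == v.1) && (u.2 != v.2)).

Definition bunkbed (R : realType) (T : finType) (e : rel T) : Prop :=
  forall mu : {set (T * bool)} -> R,
    (forall f, f \in edges (bb_rel e) -> 0 <= mu f <= 1) ->
    (forall x y, e x y ->
       mu [set (x, false); (y, false)] = mu [set (x, true); (y, true)]) ->
    forall x y,
      perc_prob (edges (bb_rel e)) mu (fun X => joined X (x, false) (y, true))
      <= perc_prob (edges (bb_rel e)) mu (fun X => joined X (x, false) (y, false)).

(* Gluing A and B by identifying a in A with b in B.
   Vertex set: V(A) + (V(B) \ {b}); b is sent to a. *)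
Definition glue_vert (TA TB : finType) (b : TB) : finType :=
  (TA + {y : TB | y != b})%type.

Definition glue_inB (TA TB : finType) (a : TA) (b : TB) (y : TB) :
    glue_vert TA b :=
  match boolP (y != b) with
  | AltTrue h => inr (exist _ y h)
  | AltFalse _ => inl a
  end.

Definition glue_rel (TA TB : finType) (eA : rel TA) (eB : rel TB)
    (a : TA) (b : TB) : rel (glue_vert TA b) :=
  fun u v =>
    [exists x : TA, exists y : TA, eA x y && (inl x == u) && (inl y == v)]
    || [exists x : TB, exists y : TB,
          eB x y && (glue_inB a b x == u) && (glue_inB a b y == v)].
Arguments glue_inB {TA TB} a b y.
Arguments glue_rel {TA TB} eA eB a b u v.

(* Main.v *)
Require Import Defs.
From HB Require Import structures.
From mathcomp Require Import all_boot all_order all_algebra.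
From mathcomp Require Import reals.
From mathcomp Require Import ring lra.
Set Implicit Arguments. Unset Strict Implicit. Unset Printing Implicit Defensive.
Import Order.TTheory GRing.Theory Num.Theory.
Local Open Scope ring_scope.

Section Perc.
Variable R : realType.

Definition wt (V : finType) (E X : {set {set V}}) (mu : {set V} -> R) : R :=
  (\prod_(f in X) mu f) * (\prod_(f in E :\: X) (1 - mu f)).
Definition Ex (V : finType) (E : {set {set V}}) (mu : {set V} -> R)
   (h : {set {set V}} -> R) : R :=
  \sum_(X in powerset E) wt E X mu * h X.

Lemma Ex_ext (V : finType) (E : {set {set V}}) (mu : {set V} -> R) (h h' : {set {set V}} -> R) :
  (forall X : {set {set V}}, X \subset E -> h X = h' X) -> Ex E mu h = Ex E mu h'.
Proof.
move=> H; apply: eq_bigr => X; rewrite powersetE => sXE; by rewrite H.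
Qed.

Lemma Ex_mu_ext (V : finType) (E : {set {set V}}) (mu mu' : {set V} -> R) (h : {set {set V}} -> R) :
  (forall f, f \in E -> mu f = mu' f) -> Ex E mu h = Ex E mu' h.
Proof.
move=> H; apply: eq_bigr => X; rewrite powersetE => sXE; rewrite /wt.
congr (_ * _ * _).
  by apply: eq_bigr => f fX; rewrite H // (subsetP sXE).
by apply: eq_bigr => f; rewrite inE => /andP[_ fE]; rewrite H.
Qed.

Lemma Ex_add (V : finType) (E : {set {set V}}) (mu : {set V} -> R) (h g : {set {set V}} -> R) :
  Ex E mu (fun X => h X + g X) = Ex E mu h + Ex E mu g.
Proof. by rewrite /Ex -big_split; apply: eq_bigr => X _; rewrite mulrDr. Qed.

Lemma Ex_scale (V : finType) (E : {set {set V}}) (mu : {set V} -> R) c (h : {set {set V}} -> R) :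
  Ex E mu (fun X => c * h X) = c * Ex E mu h.
Proof. by rewrite /Ex mulr_sumr; apply: eq_bigr => X _; rewrite mulrCA. Qed.

Lemma Ex_single (V : finType) (e : {set V}) (mu : {set V} -> R) (g : {set {set V}} -> R) :
  Ex [set e] mu g = mu e * g [set e] + (1 - mu e) * g set0.
Proof.
rewrite /Ex powerset1 big_setU1 /=; last first.
  by rewrite inE; apply/eqP => /setP /(_ e); rewrite !inE eqxx.
rewrite big_set1 /wt setDv setD0 !big_set0 !big_set1 mul1r mulr1 addrC.
by [].
Qed.

Lemma prodU (V : finType) (A B : {set {set V}}) (F : {set V} -> R) :
  [disjoint A & B] ->
  \prod_(f in A :|: B) F f = (\prod_(f in A) F f) * (\prod_(f in B) F f).
Proof.
move=> d; rewrite (eq_bigl [predU A & B]); first exact: bigU.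
by move=> f; rewrite !inE.
Qed.

Lemma Ex_split (V : finType) (E1 E2 : {set {set V}}) (mu : {set V} -> R) (h : {set {set V}} -> R) :
  [disjoint E1 & E2] ->
  Ex (E1 :|: E2) mu h = Ex E1 mu (fun X1 => Ex E2 mu (fun X2 => h (X1 :|: X2))).
Proof.
move=> dE.
have key : forall X1 X2 : {set {set V}}, X1 \subset E1 -> X2 \subset E2 -> (X1 :|: X2) :&: E1 = X1
    /\ (X1 :|: X2) :&: E2 = X2.
  move=> X1 X2 s1 s2; split; apply/setP => f; rewrite !inE.
    case f1: (f \in X1); rewrite /= ?(subsetP s1 f f1) ?andbT //.
    case f2: (f \in X2) => //=.
    by rewrite (disjointFl dE (subsetP s2 f f2)).
  case f2: (f \in X2); rewrite /= ?(subsetP s2 f f2) ?andbT ?orbT //.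
  rewrite orbF; case f1: (f \in X1) => //=.
  by rewrite (disjointFr dE (subsetP s1 f f1)).
set A := [set p : {set {set V}} * {set {set V}} | (p.1 \subset E1) && (p.2 \subset E2)].
have hP : powerset (E1 :|: E2) = [set p.1 :|: p.2 | p in A].
  apply/setP => X; rewrite powersetE; apply/idP/imsetP.
    move=> sX; exists (X :&: E1, X :&: E2).
      by rewrite inE /= !subsetIr.
    by rewrite /= -setIUr (setIidPl sX).
  case=> [[X1 X2]]; rewrite inE /= => /andP[s1 s2] ->.
  exact: setUSS.
have hinj : {in A &, injective (fun p => p.1 :|: p.2)}.
  move=> [X1 X2] [Y1 Y2]; rewrite !inE /= => /andP[s1 s2] /andP[t1 t2] e.
  have [a1 a2] := key _ _ s1 s2; have [b1 b2] := key _ _ t1 t2.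
  rewrite /= in e; by congr pair; [rewrite -a1 e b1 | rewrite -a2 e b2].
rewrite /Ex hP big_imset //=.
rewrite (eq_bigl (fun p => (p.1 \in powerset E1) && (p.2 \in powerset E2))); last first.
  by move=> p; rewrite !inE.
rewrite -(pair_big_dep (fun X1 => X1 \in powerset E1) (fun _ X2 => X2 \in powerset E2)
   (fun X1 X2 => wt (E1 :|: E2) (X1 :|: X2) mu * h (X1 :|: X2))) /=.
apply: eq_bigr => X1; rewrite powersetE => s1; rewrite mulr_sumr.
apply: eq_bigr => X2; rewrite powersetE => s2; rewrite mulrA; congr (_ * _).
have d12 : [disjoint X1 & X2].
  by apply: (disjointWl s1); apply: (disjointWr s2).
rewrite /wt prodU //.
have -> : (E1 :|: E2) :\: (X1 :|: X2) = (E1 :\: X1) :|: (E2 :\: X2).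
  apply/setP => f; rewrite !inE.
  case f1: (f \in E1); case f2: (f \in E2); rewrite /= ?andbT ?andbF ?orbF //.
  - by rewrite (disjointFr dE f1) in f2.
  - have -> : (f \in X2) = false by apply/negP => /(subsetP s2); rewrite f2.
    by rewrite orbF.
  - have -> : (f \in X1) = false by apply/negP => /(subsetP s1); rewrite f1.
    by [].
rewrite prodU; last first.
  rewrite -setI_eq0; apply/eqP/setP => f; rewrite !inE.
  apply/negP => /andP[/andP[_ f1] /andP[_ f2]]; by rewrite (disjointFr dE f1) in f2.
by rewrite mulrACA.
Qed.


Lemma Ex_decomp (V : finType) (E : {set {set V}}) (v : {set V}) (mu : {set V} -> R) (h : {set {set V}} -> R) :
  v \in E ->
  Ex E mu h = mu v * Ex (E :\ v) mu (fun X => h (v |: X))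
              + (1 - mu v) * Ex (E :\ v) mu h.
Proof.
move=> vE; rewrite -{1}(setD1K vE) Ex_split; last first.
  by rewrite disjoints1 !inE eqxx.
rewrite Ex_single; congr (_ + _ * _).
by rewrite /Ex; apply: eq_bigr => X _; rewrite set0U.
Qed.

Lemma Ex1 (V : finType) (E : {set {set V}}) mu : Ex E mu (fun _ => 1) = 1.
Proof.
elim: {E}_.+1 {-2}E (ltnSn #|E|) => // n IH E hE.
case: (set_0Vmem E) => [->|[e eE]].
  by rewrite /Ex powerset0 big_set1 /wt setD0 !big_set0 !mulr1.
have lt : (#|E :\ e| < n)%N by rewrite -ltnS (leq_trans _ hE) // ltnS (cardsD1 e E) eE.
rewrite (Ex_decomp _ _ eE) /=.
have H1 := IH _ lt. rewrite /Ex in H1 *. rewrite H1.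
by rewrite !mulr1 addrC subrK.
Qed.

Definition valid (V : finType) (E : {set {set V}}) (mu : {set V} -> R) :=
  forall f, f \in E -> 0 <= mu f <= 1.

Lemma wt_ge0 (V : finType) (E X : {set {set V}}) mu :
  valid E mu -> X \subset E -> 0 <= wt E X mu.
Proof.
move=> vm sX; rewrite /wt mulr_ge0 //; apply: prodr_ge0 => f fX.
  by have /andP[] := vm f (subsetP sX f fX).
rewrite subr_ge0; move: fX; rewrite inE => /andP[_ fE].
by have /andP[] := vm f fE.
Qed.

Lemma Ex_le (V : finType) (E : {set {set V}}) (mu : {set V} -> R) (h h' : {set {set V}} -> R) :
  valid E mu -> (forall X : {set {set V}}, X \subset E -> h X <= h' X) -> Ex E mu h <= Ex E mu h'.
Proof.
move=> vm H; apply: ler_sum => X; rewrite powersetE => sX.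
by rewrite ler_wpM2l ?wt_ge0 ?H.
Qed.

Lemma Ex_ind01 (V : finType) (E : {set {set V}}) mu (P : pred {set {set V}}) :
  valid E mu -> 0 <= Ex E mu (fun X => (P X)%:R) <= 1.
Proof.
move=> vm; apply/andP; split.
  apply: sumr_ge0 => X; rewrite powersetE => sX.
  by rewrite mulr_ge0 ?wt_ge0 ?ler0n.
rewrite -[X in _ <= X](Ex1 E mu); apply: Ex_le => // X _.
by case: (P X); rewrite ?ler01 ?lexx.
Qed.

Definition upd (V : finType) (mu : {set V} -> R) (v : {set V}) (c : R) :=
  fun f => if f == v then c else mu f.

Lemma Ex_upd0 (V : finType) (E : {set {set V}}) (v : {set V}) (mu : {set V} -> R) (h : {set {set V}} -> R) :
  v \in E -> Ex E (upd mu v 0) h = Ex (E :\ v) mu h.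
Proof.
move=> vE; rewrite (Ex_decomp _ _ vE) /upd eqxx mul0r add0r subr0 mul1r.
by apply: Ex_mu_ext => f; rewrite !inE => /andP[/negPf -> _].
Qed.

Lemma Ex_upd1 (V : finType) (E : {set {set V}}) (v : {set V}) (mu : {set V} -> R) (h : {set {set V}} -> R) :
  v \in E -> Ex E mu (fun X => h (v |: X)) = Ex E (upd mu v 1) h.
Proof.
move=> vE; rewrite (Ex_decomp _ _ vE) [RHS](Ex_decomp _ _ vE) /upd eqxx subrr.
rewrite mul0r addr0 mul1r.
have -> : Ex (E :\ v) mu (fun X => h (v |: (v |: X))) = Ex (E :\ v) mu (fun X => h (v |: X)).
  by apply: Ex_ext => X _; rewrite setUA setUid.
rewrite -mulrDl addrC subrK mul1r.
by apply: Ex_mu_ext => f; rewrite !inE => /andP[/negPf -> _].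
Qed.

Lemma perc_Ex (V : finType) (E : {set {set V}}) mu (ev : pred {set {set V}}) :
  perc_prob E mu ev = Ex E mu (fun X => (ev X)%:R).
Proof.
rewrite /perc_prob /Ex big_mkcondr /=; apply: eq_bigr => X _.
by case: (ev X); rewrite ?mulr1 ?mulr0.
Qed.

End Perc.
Section Joined.
Variable V : finType.
Implicit Types (X Y : {set {set V}}) (u w z : V).

Lemma joined_ind X (P : V -> Prop) u w :
  P u -> (forall z z', P z -> [set z; z'] \in X -> P z') -> joined X u w -> P w.
Proof.
move=> Pu step /connectP [pth]; elim: pth u Pu => [|z pth IH] u Pu /=.
  by move=> _ ->.
by move=> /andP[e pth2] hw; apply: (IH z) => //; exact: step e.
Qed.

Lemma joined_refl X u : joined X u u.
Proof. exact: connect0. Qed.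

Lemma joined_edge X u w : [set u; w] \in X -> joined X u w.
Proof. by move=> e; apply: connect1. Qed.

Lemma joined_trans X u w z : joined X u w -> joined X w z -> joined X u z.
Proof. exact: connect_trans. Qed.

Lemma joined_sym X u w : joined X u w = joined X w u.
Proof.
have S : symmetric (fun x y : V => [set x; y] \in X) by move=> x y; rewrite setUC.
rewrite /joined; exact: (sym_connect_sym S u w).
Qed.

Lemma joined_mono X Y u w : X \subset Y -> joined X u w -> joined Y u w.
Proof.
move=> sXY; apply: (joined_ind (P := fun z => joined Y u z)); first exact: joined_refl.
move=> z z' h e; apply: joined_trans h _; apply: joined_edge; exact: subsetP sXY _ e.
Qed.

End Joined.

Section Relabel.
Variables (V W : finType) (phi : V -> W).
Hypothesis phi_inj : injective phi.

Definition imgS (f : {set V}) : {set W} := phi @: f.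
Definition img (X : {set {set V}}) : {set {set W}} := imgS @: X.

Lemma imgS_inj : injective imgS.
Proof. exact: imset_inj. Qed.

Lemma img_inj : injective img.
Proof. exact: imset_inj imgS_inj. Qed.

Lemma imgS2 u w : imgS [set u; w] = [set phi u; phi w].
Proof. by rewrite /imgS imsetU1 imset_set1. Qed.

Lemma joined_img X u w : joined (img X) (phi u) (phi w) = joined X u w.
Proof.
apply/idP/idP; last first.
  move=> J; apply: (joined_ind (P := fun z => joined (img X) (phi u) (phi z))) J.
    exact: joined_refl.
  move=> z z' h e; apply: joined_trans h _; apply: joined_edge.
  by rewrite -imgS2 /img mem_imset //; exact: imgS_inj.
move=> J.
have : exists2 z, phi w = phi z & joined X u z.
  apply: (joined_ind (P := fun y => exists2 z, y = phi z & joined X u z)) J.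
    by exists u => //; exact: joined_refl.
  move=> y y' [z -> h] /imsetP [g gX eg].
  have : y' \in imgS g by rewrite -eg !inE eqxx orbT.
  move=> /imsetP [z' _ ey']; rewrite ey' in eg *.
  exists z' => //.
  have eg2 : g = [set z; z'] by apply: imgS_inj; rewrite imgS2 -eg.
  rewrite eg2 in gX.
  by apply: joined_trans h _; apply: joined_edge.
by case=> z /phi_inj ->.
Qed.

Lemma img_powerset (E : {set {set V}}) :
  powerset (img E) = img @: powerset E.
Proof.
apply/setP => Y; apply/idP/imsetP.
  rewrite powersetE => sY.
  exists [set f in E | imgS f \in Y].
    by rewrite powersetE; apply/subsetP => f; rewrite inE => /andP[].
  apply/setP => g; apply/idP/imsetP.
    move=> gY; have := subsetP sY g gY; case/imsetP => f fE eg.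
    by exists f => //; rewrite inE fE -eg gY.
  by case=> f; rewrite inE => /andP[_ fY] ->.
case=> X; rewrite powersetE => sX ->; rewrite powersetE; exact: imsetS.
Qed.

Lemma img_setD (E X : {set {set V}}) : img E :\: img X = img (E :\: X).
Proof.
apply/setP => g; apply/idP/imsetP.
  rewrite inE => /andP[gX /imsetP [f fE eg]]; exists f => //.
  rewrite inE fE andbT; apply: contra gX => fX; by rewrite eg /img mem_imset //; exact: imgS_inj.
case=> f; rewrite inE => /andP[fX fE] ->.
rewrite inE /img !mem_imset ?fE ?andbT //; exact: imgS_inj.
Qed.

Variable R : realType.

Lemma Ex_relabel (E : {set {set V}}) (mu : {set W} -> R) (h : {set {set W}} -> R) :
  Ex (img E) mu h = Ex E (fun f => mu (imgS f)) (fun X => h (img X)).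
Proof.
rewrite /Ex img_powerset big_imset; last by move=> X Y _ _; exact: img_inj.
apply: eq_bigr => X _; congr (_ * _); rewrite /wt img_setD /img !big_imset //;
  by move=> f g _ _; exact: imgS_inj.
Qed.

End Relabel.
Section Conn.
Variables (G : finType) (g0 : G).
Local Notation V := (G * bool)%type.
Local Notation p := (g0, false).
Local Notation q := (g0, true).
Local Notation v := [set (g0, false); (g0, true)].
Variables (E1 E2 : {set {set V}}) (r1 r2 : pred G).
Hypothesis hE1 : forall f, f \in E1 -> forall z, z \in f -> r1 z.1.
Hypothesis hE2 : forall f, f \in E2 -> forall z, z \in f -> r2 z.1.
Hypothesis hr12 : forall g, r1 g -> r2 g -> g = g0.

Lemma pq_conn (X : {set {set V}}) (t t' : V) :
  joined X p q -> t.1 = g0 -> t'.1 = g0 -> joined X t t'.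
Proof.
case: t t' => [a s] [a' s'] /= J -> ->.
case: s; case: s'; rewrite ?joined_refl //.
by rewrite joined_sym.
Qed.

Definition Yof (X1 X2 : {set {set V}}) :=
  if joined X2 p q then v |: X1 else X1.

Lemma pq_join (X1 X2 : {set {set V}}) (t t' : V) :
  t.1 = g0 -> t'.1 = g0 -> joined X2 t t' -> joined (Yof X1 X2) t t'.
Proof.
case: t t' => [a s] [a' s'] /= -> ->.
case: s; case: s' => J; rewrite ?joined_refl //.
  rewrite joined_sym in J.
  rewrite /Yof J; apply: joined_edge; by rewrite setUC setU11.
by rewrite /Yof J; apply: joined_edge; rewrite setU11.
Qed.

Lemma edge_l (z z' : V) : z \in [set z; z']. Proof. by rewrite !inE eqxx. Qed.
Lemma edge_r (z z' : V) : z' \in [set z; z']. Proof. by rewrite !inE eqxx orbT. Qed.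

Lemma MC (X1 X2 : {set {set V}}) (x z : V) :
  X1 \subset E1 -> X2 \subset E2 -> r1 x.1 ->
  joined (X1 :|: X2) x z ->
  (r1 z.1 -> joined (Yof X1 X2) x z) /\
  (~~ r1 z.1 -> exists s, joined (Yof X1 X2) x (g0, s) /\ joined X2 (g0, s) z).
Proof.
move=> s1 s2 rx.
have sY : X1 \subset Yof X1 X2 by rewrite /Yof; case: ifP => // _; exact: subsetUr.
apply: (joined_ind (P := fun z => (r1 z.1 -> joined (Yof X1 X2) x z) /\
  (~~ r1 z.1 -> exists s, joined (Yof X1 X2) x (g0, s) /\ joined X2 (g0, s) z))).
  by split => // h; [exact: joined_refl | rewrite rx in h].
move=> y y' [P1 P2]; rewrite inE => /orP[e1|e2].
  have eE1 := subsetP s1 _ e1.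
  have ry := hE1 eE1 (edge_l y y'); have ry' := hE1 eE1 (edge_r y y').
  split; last by rewrite ry'.
  move=> _; apply: joined_trans (P1 ry) _; apply: joined_edge; exact: subsetP sY _ e1.
have eE2 := subsetP s2 _ e2.
have ry := hE2 eE2 (edge_l y y'); have ry' := hE2 eE2 (edge_r y y').
have Jyy' : joined X2 y y' by exact: joined_edge.
case r1y: (r1 y.1).
  have y1 := hr12 r1y ry.
  split.
    move=> r1y'; apply: joined_trans (P1 r1y) _; apply: pq_join => //; exact: hr12.
  move=> _; exists y.2; split; last by rewrite -y1 -surjective_pairing.
  by rewrite -y1 -surjective_pairing; exact: P1 r1y.
have [s [Jx Js]] := P2 (negbT r1y).
have Js' : joined X2 (g0, s) y' by exact: joined_trans Js Jyy'.
split; last by move=> _; exists s.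
move=> r1y'; apply: joined_trans Jx _; apply: pq_join => //; exact: hr12.
Qed.

Lemma L1_conn (X1 X2 : {set {set V}}) (x y : V) :
  X1 \subset E1 -> X2 \subset E2 -> r1 x.1 -> r1 y.1 ->
  joined (X1 :|: X2) x y = joined (Yof X1 X2) x y.
Proof.
move=> s1 s2 rx ry; apply/idP/idP.
  by move=> J; have [+ _] := MC s1 s2 rx J; apply.
apply: (joined_ind (P := fun z => joined (X1 :|: X2) x z)); first exact: joined_refl.
move=> z z' J; rewrite /Yof; case: ifP => c e.
  move: e; rewrite in_setU1 => /orP[/eqP e|e]; last first.
    by apply: joined_trans J _; apply: joined_edge; rewrite inE e.
  apply: joined_trans J _; apply: (joined_mono (X := X2)); first exact: subsetUr.
  have zv : z \in v by rewrite -e edge_l.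
  have z'v : z' \in v by rewrite -e edge_r.
  apply: pq_conn => //.
    by move: zv; rewrite !inE => /orP[] /eqP ->.
  by move: z'v; rewrite !inE => /orP[] /eqP ->.
by apply: joined_trans J _; apply: joined_edge; rewrite inE e.
Qed.

Lemma addv_conn (X1 : {set {set V}}) (x t : V) :
  joined (v |: X1) x t -> joined X1 x t \/ exists s, joined X1 x (g0, s).
Proof.
apply: (joined_ind (P := fun z => joined X1 x z \/ exists s, joined X1 x (g0, s))).
  by left; exact: joined_refl.
move=> z z' [J|[s J]] e; last by right; exists s.
move: e; rewrite in_setU1 => /orP[/eqP e|e].
  have : z \in v by rewrite -e edge_l.
  by rewrite !inE => /orP[] /eqP Ez; right; [exists false | exists true]; rewrite -Ez.
by left; apply: joined_trans J _; apply: joined_edge.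
Qed.

Lemma cross_conn (X1 X2 : {set {set V}}) (x y : V) :
  X1 \subset E1 -> X2 \subset E2 -> r1 x.1 -> ~~ r1 y.1 ->
  joined (X1 :|: X2) x y =
  (joined X1 x p && joined X2 p y) || (joined X1 x q && joined X2 q y).
Proof.
move=> s1 s2 rx ry; apply/idP/idP; last first.
  have m1 : X1 \subset X1 :|: X2 by exact: subsetUl.
  have m2 : X2 \subset X1 :|: X2 by exact: subsetUr.
  by case/orP => /andP[J K]; apply: joined_trans (joined_mono m1 J) (joined_mono m2 K).
move=> J; have [_ /(_ ry) [s [Jx Js]]] := MC s1 s2 rx J.
suff [s' [J1 J2]] : exists s', joined X1 x (g0, s') /\ joined X2 (g0, s') y.
  by case: s' J1 J2 => -> ->; rewrite ?orbT.
move: Jx; rewrite /Yof; case: ifP => c Jx; first last.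
  by exists s.
have [J1|[s' J1]] := addv_conn Jx; first by exists s.
exists s'; split => //; apply: joined_trans Js; exact: pq_conn.
Qed.

End Conn.
Definition flip (G : finType) (u : G * bool) : G * bool := (u.1, ~~ u.2).

Lemma flipK (G : finType) : involutive (@flip G).
Proof. by case=> a s; rewrite /flip /= negbK. Qed.

Lemma flip_inj (G : finType) : injective (@flip G).
Proof. exact: inv_inj (@flipK G). Qed.

Section Lin.
Variable R : realType.
Lemma Ex_lin2 (V : finType) (E : {set {set V}}) (mu : {set V} -> R) a b
  (h g : {set {set V}} -> R) :
  Ex E mu (fun X => a * h X + b * g X) = a * Ex E mu h + b * Ex E mu g.
Proof.
rewrite /Ex !mulr_sumr -big_split; apply: eq_bigr => X _ /=; ring.
Qed.

Lemma Ex_lin3 (V : finType) (E : {set {set V}}) (mu : {set V} -> R) a b c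
  (h g k : {set {set V}} -> R) :
  Ex E mu (fun X => a * h X + b * g X + c * k X) =
  a * Ex E mu h + b * Ex E mu g + c * Ex E mu k.
Proof.
rewrite /Ex !mulr_sumr -!big_split; apply: eq_bigr => X _ /=; ring.
Qed.
End Lin.

Section Abs.
Variable R : realType.
Variables (G : finType) (g0 : G).
Local Notation V := (G * bool)%type.
Local Notation p := (g0, false).
Local Notation q := (g0, true).
Local Notation v := [set (g0, false); (g0, true)].
Variables (E1 E2 : {set {set V}}) (r1 r2 : pred G) (mu : {set V} -> R).
Hypothesis hE1 : forall f, f \in E1 -> forall z, z \in f -> r1 z.1.
Hypothesis hE2 : forall f, f \in E2 -> forall z, z \in f -> r2 z.1.
Hypothesis hr12 : forall g, r1 g -> r2 g -> g = g0.
Hypothesis hcov : forall g, r1 g || r2 g.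
Hypothesis r1g0 : r1 g0.
Hypothesis r2g0 : r2 g0.
Hypothesis hv1 : v \in E1.
Hypothesis hv2 : v \in E2.
Hypothesis hI : forall f, f \in E1 -> f \in E2 -> f = v.
Hypothesis hval : valid (E1 :|: E2) mu.
Hypothesis SB1 : forall c, 0 <= c <= 1 -> forall x y, r1 x -> r1 y ->
  Ex E1 (upd mu v c) (fun X => (joined X (x, false) (y, true))%:R) <=
  Ex E1 (upd mu v c) (fun X => (joined X (x, false) (y, false))%:R).
Hypothesis SB2 : forall c, 0 <= c <= 1 -> forall x y, r2 x -> r2 y ->
  Ex E2 (upd mu v c) (fun X => (joined X (x, false) (y, true))%:R) <=
  Ex E2 (upd mu v c) (fun X => (joined X (x, false) (y, false))%:R).
Hypothesis hflip2 : img (@flip G) E2 = E2.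
Hypothesis hmuflip : forall f, f \in E1 :|: E2 -> mu (imgS (@flip G) f) = mu f.

Local Notation E2' := (E2 :\ v).

Lemma ED_split : E1 :|: E2 = E1 :|: E2'.
Proof.
apply/setP => f; rewrite !inE; case f1: (f \in E1) => //=.
case: eqP => // e; by rewrite e hv1 in f1.
Qed.

Lemma ED_disj : [disjoint E1 & E2'].
Proof.
rewrite -setI_eq0; apply/eqP/setP => f; rewrite !inE.
apply/negP => /and3P[f1 /eqP nv f2]; exact: nv (hI f1 f2).
Qed.

Lemma hE2' : forall f, f \in E2' -> forall z, z \in f -> r2 z.1.
Proof. by move=> f; rewrite inE => /andP[_]; exact: hE2. Qed.

Lemma val1 : valid E1 mu.
Proof. by move=> f f1; apply: hval; rewrite inE f1. Qed.
Lemma val2' : valid E2' mu.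
Proof. by move=> f; rewrite !inE => /andP[_ f2]; apply: hval; rewrite inE f2 orbT. Qed.

Lemma muv01 : 0 <= mu v <= 1.
Proof. by apply: hval; rewrite inE hv1. Qed.

Lemma upd_self : forall f, f \in E1 -> upd mu v (mu v) f = mu f.
Proof. by move=> f _; rewrite /upd; case: eqP => // ->. Qed.

Theorem abs_L1 (x y : G) : r1 x -> r1 y ->
  Ex (E1 :|: E2) mu (fun X => (joined X (x, false) (y, true))%:R) <=
  Ex (E1 :|: E2) mu (fun X => (joined X (x, false) (y, false))%:R).
Proof.
move=> rx ry.
set cb := Ex E2' mu (fun X => (joined X p q)%:R).
have key : forall s, Ex (E1 :|: E2) mu (fun X => (joined X (x, false) (y, s))%:R) =
   cb * Ex E1 (upd mu v 1) (fun X => (joined X (x, false) (y, s))%:R) +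
   (1 - cb) * Ex E1 (upd mu v (mu v)) (fun X => (joined X (x, false) (y, s))%:R).
  move=> s; rewrite ED_split Ex_split; last exact: ED_disj.
  rewrite -(Ex_upd1 mu (fun X => (joined X (x, false) (y, s))%:R) hv1).
  rewrite (Ex_mu_ext (mu := upd mu v (mu v)) (mu' := mu) _ upd_self) -Ex_lin2.
  apply: Ex_ext => X1 s1.
  rewrite (@Ex_ext _ _ _ mu _ (fun X2 => (joined X1 (x, false) (y, s))%:R * 1 +
     ((joined (v |: X1) (x, false) (y, s))%:R - (joined X1 (x, false) (y, s))%:R)
      * (joined X2 p q)%:R)); last first.
    move=> X2 s2; rewrite (L1_conn (E1 := E1) (E2 := E2') hE1 hE2' hr12) //.
    rewrite /Yof; case: (joined X2 p q) => /=; ring.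
  rewrite Ex_lin2 Ex1 -/cb; ring.
have c01 : 0 <= cb <= 1 by apply: Ex_ind01; exact: val2'.
have c1 : 0 <= (1 : R) <= 1 by apply/andP; split; lra.
have h1 := SB1 c1 rx ry.
have h0 := SB1 muv01 rx ry.
rewrite !key.
move: c01 => /andP[cb0 cb1].
nra.
Qed.


Lemma ind4 (a b c d : bool) :
  ((a && b) || (c && d))%:R = a%:R * b%:R + c%:R * d%:R + (- (a%:R * c%:R)) * (b%:R * d%:R) :> R.
Proof. by case: a; case: b; case: c; case: d => /=; ring. Qed.

Lemma imgE2' : img (@flip G) E2' = E2'.
Proof.
rewrite -(img_setD (@flip_inj G)).
rewrite hflip2 /img imset_set1 imgS2.
by rewrite /flip /= setUC.
Qed.

Lemma flip_Ex (h : {set {set V}} -> R) :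
  Ex E2' mu h = Ex E2' mu (fun X => h (img (@flip G) X)).
Proof.
rewrite -{1}imgE2' (Ex_relabel (@flip_inj G)).
apply: Ex_mu_ext => f f2; apply: hmuflip.
by move: f2; rewrite !inE => /andP[_ ->]; rewrite orbT.
Qed.

Lemma flipJ (X : {set {set V}}) (u w : V) :
  joined (img (@flip G) X) (flip u) (flip w) = joined X u w.
Proof. exact: (joined_img (@flip_inj G)). Qed.

Theorem abs_cross (x y : G) : r1 x -> ~~ r1 y ->
  Ex (E1 :|: E2) mu (fun X => (joined X (x, false) (y, true))%:R) <=
  Ex (E1 :|: E2) mu (fun X => (joined X (x, false) (y, false))%:R).
Proof.
move=> rx ry.
set jp := Ex E1 mu (fun X => (joined X (x, false) p)%:R).
set jq := Ex E1 mu (fun X => (joined X (x, false) q)%:R).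
set jpq := Ex E1 mu (fun X => (joined X (x, false) p)%:R * (joined X (x, false) q)%:R).
pose kp s := Ex E2' mu (fun X => (joined X p (y, s))%:R).
pose kq s := Ex E2' mu (fun X => (joined X q (y, s))%:R).
pose kpq s := Ex E2' mu (fun X => (joined X p (y, s))%:R * (joined X q (y, s))%:R).
have key : forall s, Ex (E1 :|: E2) mu (fun X => (joined X (x, false) (y, s))%:R) =
    kp s * jp + kq s * jq + (- kpq s) * jpq.
  move=> s; rewrite ED_split Ex_split; last exact: ED_disj.
  rewrite /jp /jq /jpq -Ex_lin3; apply: Ex_ext => X1 s1.
  rewrite (@Ex_ext _ _ _ mu _ (fun X2 =>
     (joined X1 (x, false) p)%:R * (joined X2 p (y, s))%:R +
     (joined X1 (x, false) q)%:R * (joined X2 q (y, s))%:R +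
     (- ((joined X1 (x, false) p)%:R * (joined X1 (x, false) q)%:R)) *
       ((joined X2 p (y, s))%:R * (joined X2 q (y, s))%:R))); last first.
    move=> X2 s2; rewrite (cross_conn (E1 := E1) (E2 := E2') hE1 hE2' hr12) //.
    exact: ind4.
  rewrite Ex_lin3 /kp /kq /kpq; ring.
have fp : kp true = kq false.
  rewrite /kp /kq flip_Ex; apply: Ex_ext => X _.
  by rewrite -[(g0, false)]/(flip (g0, true)) -[(y, true)]/(flip (y, false)) flipJ.
have fq : kq true = kp false.
  rewrite /kp /kq flip_Ex; apply: Ex_ext => X _.
  by rewrite -[(g0, true)]/(flip (g0, false)) -[(y, true)]/(flip (y, false)) flipJ.
have fpq : kpq true = kpq false.
  rewrite /kpq flip_Ex; apply: Ex_ext => X _.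
  rewrite -[(g0, true)]/(flip (g0, false)) -[(y, true)]/(flip (y, false)).
  rewrite -[(g0, false)]/(flip (g0, true)) !flipJ mulrC //.
have hj : jq <= jp.
  have := SB1 muv01 rx r1g0.
  by rewrite !(Ex_mu_ext _ upd_self).
have ry2 : r2 y by move: (hcov y); rewrite (negbTE ry).
have hk : kq false <= kp false.
  have c0 : 0 <= (0 : R) <= 1 by apply/andP; split; lra.
  have := SB2 c0 ry2 r2g0.
  rewrite !Ex_upd0 // /kp /kq.
  have e1 : forall (t : V), Ex E2' mu (fun X => (joined X (y, false) t)%:R) =
     Ex E2' mu (fun X => (joined X t (y, false))%:R).
    by move=> t; apply: Ex_ext => X _; rewrite joined_sym.
  by rewrite !e1.
rewrite !key fp fq fpq.
nra.
Qed.

End Abs.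
Section Glue.
Variables (TA TB : finType) (a : TA) (b : TB).

Lemma gB_b : glue_inB a b b = inl a.
Proof. rewrite /glue_inB; destruct (boolP (b != b)) as [h|h] => //; by exfalso; move: h; rewrite eqxx. Qed.

Lemma gB_inl (y : TB) (z : TA) : glue_inB a b y = inl z -> y = b /\ z = a.
Proof. rewrite /glue_inB; destruct (boolP (y != b)) as [h|h] => //; by move: (h) => /negPn /eqP -> [->]. Qed.

Lemma gB_inr (y : TB) w : glue_inB a b y = inr w -> y = val w.
Proof. rewrite /glue_inB; destruct (boolP (y != b)) as [h|h] => // -[<-] //. Qed.

Lemma gB_val (w : {y : TB | y != b}) : glue_inB a b (val w) = inr w.
Proof.
case: w => y h /=; rewrite /glue_inB; destruct (boolP (y != b)) as [h'|h'].
  by congr inr; apply: val_inj.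
by exfalso; move: h'; rewrite h.
Qed.

Lemma gB_inj : injective (glue_inB a b).
Proof.
move=> x y.
case ex: (glue_inB a b x) => [z|w]; move/esym.
  by have [-> _] := gB_inl ex => /gB_inl [->].
by move/gB_inr ->; rewrite (gB_inr ex).
Qed.

End Glue.
Lemma edges_in (T : finType) (e : rel T) u w : e u w -> [set u; w] \in edges e.
Proof. by move=> h; apply/imsetP; exists (u, w); rewrite // inE. Qed.

Lemma edgesE (T : finType) (e : rel T) f :
  f \in edges e -> exists u w, e u w /\ f = [set u; w].
Proof. by case/imsetP => [[u w]]; rewrite inE /= => euw ->; exists u, w. Qed.

Definition liftb (T G : finType) (phi : T -> G) (u : T * bool) : G * bool :=
  (phi u.1, u.2).

Section Embed.
Variables (T G : finType) (eT : rel T) (eG : rel G) (phi : T -> G).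
Hypothesis phi_inj : injective phi.
Hypothesis hom : forall x y, eT x y -> eG (phi x) (phi y).
Local Notation Phi := (liftb phi).
Local Notation ET := (img Phi (edges (bb_rel eT))).

Lemma liftb_inj : injective Phi.
Proof.
case=> x s [y t]; rewrite /liftb /= => -[/phi_inj -> ->] //.
Qed.

Lemma img_edges_sub : ET \subset edges (bb_rel eG).
Proof.
apply/subsetP => f /imsetP [g /edgesE [u [w [euw ->]]] ->].
rewrite imgS2; apply: edges_in; move: euw; rewrite /bb_rel /liftb /=.
case/orP => /andP[h1 h2]; first by rewrite h1 hom.
by rewrite (eqP h1) eqxx h2 orbT.
Qed.

Lemma img_edges_r f z : f \in ET -> z \in f -> z.1 \in codom phi.
Proof.
case/imsetP => g _ -> /imsetP [u _ ->]; exact: codom_f.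
Qed.

Lemma img_edges_flip : img (@flip G) ET = ET.
Proof.
have sub : img (@flip G) ET \subset ET.
  apply/subsetP => f /imsetP [g /imsetP [h /edgesE [u [w [euw ->]]] ->] ->].
  rewrite imgS2 imgS2.
  have -> : [set flip (Phi u); flip (Phi w)] = imgS Phi [set flip u; flip w].
    by rewrite imgS2.
  apply/imsetP; exists [set flip u; flip w] => //; apply: edges_in.
  move: euw; rewrite /bb_rel /flip /=.
  by case: u w => [x s] [y t] /=; case: s; case: t.
apply/eqP; rewrite eqEcard sub /= /img (card_imset _ (imgS_inj (@flip_inj G))).
by [].
Qed.

Variable R : realType.

Lemma SB_gen (nu : {set G * bool} -> R) :
  bunkbed R eT ->
  (forall f, f \in ET -> 0 <= nu f <= 1) ->
  (forall x y, eT x y -> nu [set (phi x, false); (phi y, false)] =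
                         nu [set (phi x, true); (phi y, true)]) ->
  forall x y,
  Ex ET nu (fun X => (joined X (phi x, false) (phi y, true))%:R) <=
  Ex ET nu (fun X => (joined X (phi x, false) (phi y, false))%:R).
Proof.
move=> bb hval hsym x y.
have e : forall s, Ex ET nu (fun X => (joined X (phi x, false) (phi y, s))%:R) =
  perc_prob (edges (bb_rel eT)) (fun f => nu (imgS Phi f)) (fun X => joined X (x, false) (y, s)).
  move=> s; rewrite perc_Ex (Ex_relabel liftb_inj); apply: Ex_ext => X _.
  by rewrite -[(phi x, false)]/(Phi (x, false)) -[(phi y, s)]/(Phi (y, s)) (joined_img liftb_inj).
rewrite !e; apply: bb.
  move=> f fE; apply: hval; apply/imsetP; by exists f.
by move=> a b eab; rewrite !imgS2 /liftb /=; exact: hsym.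
Qed.

End Embed.

Lemma mu_flip (R : realType) (G : finType) (e : rel G) (mu : {set G * bool} -> R) :
  (forall x y, e x y -> mu [set (x, false); (y, false)] = mu [set (x, true); (y, true)]) ->
  forall f, f \in edges (bb_rel e) -> mu (imgS (@flip G) f) = mu f.
Proof.
move=> hs f /edgesE [u [w [euw ->]]]; rewrite imgS2.
case: u w euw => [x s] [y t]; rewrite /bb_rel /flip /= => /orP[] /andP[h1 h2].
  by move/eqP: h1 => <-; case: s; rewrite /= ?hs.
move/eqP: h1 => <-; move: h2; case: s; case: t => //= _; by rewrite setUC.
Qed.
Section Final.
Variables (TA TB : finType) (eA : rel TA) (eB : rel TB) (a : TA) (b : TB).
Hypothesis irrA : irreflexive eA.
Local Notation G := (glue_vert TA b).
Local Notation eD := (glue_rel eA eB a b).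
Definition phA (x : TA) : G := inl x.
Local Notation phB := (glue_inB a b).
Local Notation g0 := (inl a : G).
Local Notation v := [set (g0, false); (g0, true)].
Local Notation EA := (img (liftb phA) (edges (bb_rel eA))).
Local Notation EB := (img (liftb phB) (edges (bb_rel eB))).
Definition rA (g : G) := g \in codom phA.
Definition rB (g : G) := g \in codom phB.

Lemma phA_inj : injective phA. Proof. by move=> x y [->]. Qed.

Lemma homA x y : eA x y -> eD (phA x) (phA y).
Proof.
move=> h; apply/orP; left; apply/existsP; exists x; apply/existsP; exists y.
by rewrite h !eqxx.
Qed.

Lemma homB x y : eB x y -> eD (phB x) (phB y).
Proof.
move=> h; apply/orP; right; apply/existsP; exists x; apply/existsP; exists y.
by rewrite h !eqxx.
Qed.

Lemma D1 : edges (bb_rel eD) = EA :|: EB.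
Proof.
apply/eqP; rewrite eqEsubset; apply/andP; split; last first.
  by rewrite subUset (img_edges_sub homA) (img_edges_sub homB).
apply/subsetP => f /edgesE [[u s] [[w t] [euw ->]]].
rewrite inE; move: euw; rewrite /bb_rel /= => /orP[] /andP[h1 h2].
  move/eqP: h1 => <-.
  case/orP: h2 => /existsP [x /existsP [y /andP[/andP[exy /eqP ex] /eqP ey]]].
    apply/orP; left; apply/imsetP; exists [set (x, s); (y, s)].
      by apply: edges_in; rewrite /bb_rel /= eqxx exy.
    by rewrite imgS2 /liftb /= /phA ex ey.
  apply/orP; right; apply/imsetP; exists [set (x, s); (y, s)].
    by apply: edges_in; rewrite /bb_rel /= eqxx exy.
  by rewrite imgS2 /liftb /= ex ey.
move/eqP: h1 => <-; case: u => [x|y].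
  apply/orP; left; apply/imsetP; exists [set (x, s); (x, t)].
    by apply: edges_in; rewrite /bb_rel /= eqxx h2 orbT.
  by rewrite imgS2.
apply/orP; right; apply/imsetP; exists [set (val y, s); (val y, t)].
  by apply: edges_in; rewrite /bb_rel /= eqxx h2 orbT.
by rewrite imgS2 /liftb /= gB_val.
Qed.

Lemma D4 g : rA g -> rB g -> g = g0.
Proof.
rewrite /rA /rB => /codomP [x ->] /codomP [y /esym /gB_inl [_ ->]] //.
Qed.

Lemma D5A : rA g0. Proof. exact: (codom_f phA a). Qed.
Lemma D5B : rB g0. Proof. by rewrite /rB -(gB_b a b); exact: codom_f. Qed.

Lemma D6A g : rA g || rB g.
Proof.
case: g => [x|w]; first by rewrite /rA (codom_f phA x).
by rewrite /rB -(gB_val a w) codom_f orbT.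
Qed.
Lemma D6B g : rB g || rA g.
Proof. by rewrite orbC D6A. Qed.

Lemma DvA : v \in EA.
Proof.
apply/imsetP; exists [set (a, false); (a, true)]; last by rewrite imgS2.
by apply: edges_in; rewrite /bb_rel /= eqxx.
Qed.

Lemma DvB : v \in EB.
Proof.
apply/imsetP; exists [set (b, false); (b, true)]; last by rewrite imgS2 /liftb /= gB_b.
by apply: edges_in; rewrite /bb_rel /= eqxx.
Qed.

Lemma DI f : f \in EA -> f \in EB -> f = v.
Proof.
move=> fA fB; have rBf := fun z (zf : z \in f) => img_edges_r fB zf.
case/imsetP: fA => g /edgesE [[x s] [[y t] [exy ->]]] ef.
rewrite imgS2 /liftb /= in ef; rewrite ef in rBf.
have ex : phA x = g0 by apply: D4; [exact: codom_f | apply: (rBf _ (edge_l _ _))].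
have ey : phA y = g0 by apply: D4; [exact: codom_f | apply: (rBf _ (edge_r _ _))].
rewrite /phA in ex ey; clear rBf fB; subst f; rewrite /phA ex ey.
case: ex => ex; case: ey => ey; subst x y.
move: exy; rewrite /bb_rel /= => /orP[] /andP[h1 h2].
  by rewrite irrA in h2.
by move: h2; case: s; case: t => //= _; rewrite setUC.
Qed.

Lemma DI' f : f \in EB -> f \in EA -> f = v.
Proof. by move=> h1 h2; exact: DI. Qed.

Lemma hEA f : f \in EA -> forall z, z \in f -> rA z.1.
Proof. by move=> fE z zf; exact: img_edges_r fE zf. Qed.
Lemma hEB f : f \in EB -> forall z, z \in f -> rB z.1.
Proof. by move=> fE z zf; exact: img_edges_r fE zf. Qed.
Lemma hrAB g : rA g -> rB g -> g = g0. Proof. exact: D4. Qed.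
Lemma hrBA g : rB g -> rA g -> g = g0. Proof. by move=> h1 h2; exact: D4. Qed.

Lemma ne_v (x y : G) s : ([set (x, s); (y, s)] == v) = false.
Proof.
apply/negP => /eqP e.
have H : (g0, ~~ s) \in [set (x, s); (y, s)].
  by rewrite e !inE !xpair_eqE eqxx /=; case: (~~ s).
clear e; move: H; by rewrite !inE !xpair_eqE; case: s; rewrite ?andbF.
Qed.

Variable R : realType.
Hypothesis bbA : bunkbed R eA.
Hypothesis bbB : bunkbed R eB.
Variable mu : {set G * bool} -> R.
Hypothesis hval : forall f, f \in edges (bb_rel eD) -> 0 <= mu f <= 1.
Hypothesis hsym : forall x y, eD x y ->
  mu [set (x, false); (y, false)] = mu [set (x, true); (y, true)].

Lemma valU : valid (EA :|: EB) mu.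
Proof. by move=> f; rewrite -D1; exact: hval. Qed.
Lemma valU' : valid (EB :|: EA) mu.
Proof. by move=> f; rewrite setUC -D1; exact: hval. Qed.

Lemma upd_val c : 0 <= c <= 1 -> forall f, f \in edges (bb_rel eD) -> 0 <= upd mu v c f <= 1.
Proof. by move=> c01 f fE; rewrite /upd; case: eqP => // _; exact: hval. Qed.

Lemma SBA : forall c, 0 <= c <= 1 -> forall x y, rA x -> rA y ->
  Ex EA (upd mu v c) (fun X => (joined X (x, false) (y, true))%:R) <=
  Ex EA (upd mu v c) (fun X => (joined X (x, false) (y, false))%:R).
Proof.
move=> c c01 x y /codomP [x' ->] /codomP [y' ->].
apply: (SB_gen phA_inj (nu := upd mu v c) bbA).
  by move=> f fE; apply: (upd_val c01); rewrite D1 inE fE.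
by move=> x0 y0 e; rewrite /upd !ne_v; exact: hsym (homA e).
Qed.

Lemma SBB : forall c, 0 <= c <= 1 -> forall x y, rB x -> rB y ->
  Ex EB (upd mu v c) (fun X => (joined X (x, false) (y, true))%:R) <=
  Ex EB (upd mu v c) (fun X => (joined X (x, false) (y, false))%:R).
Proof.
move=> c c01 x y /codomP [x' ->] /codomP [y' ->].
apply: (SB_gen (@gB_inj _ _ a b) (nu := upd mu v c) bbB).
  by move=> f fE; apply: (upd_val c01); rewrite D1 inE fE orbT.
by move=> x0 y0 e; rewrite /upd !ne_v; exact: hsym (homB e).
Qed.

Lemma hflipA : img (@flip G) EA = EA. Proof. exact: img_edges_flip. Qed.
Lemma hflipB : img (@flip G) EB = EB. Proof. exact: img_edges_flip. Qed.
Lemma hmfAB f : f \in EA :|: EB -> mu (imgS (@flip G) f) = mu f.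
Proof. rewrite -D1; exact: mu_flip hsym f. Qed.
Lemma hmfBA f : f \in EB :|: EA -> mu (imgS (@flip G) f) = mu f.
Proof. rewrite setUC -D1; exact: mu_flip hsym f. Qed.

Theorem final_main x y :
  perc_prob (edges (bb_rel eD)) mu (fun X => joined X (x, false) (y, true))
  <= perc_prob (edges (bb_rel eD)) mu (fun X => joined X (x, false) (y, false)).
Proof.
rewrite !perc_Ex D1.
case rAx: (rA x).
  case rAy: (rA y).
    exact: (abs_L1 hEA hEB hrAB DvA DI valU SBA rAx rAy).
  exact: (abs_cross hEA hEB hrAB D6A D5A D5B DvA DvB DI valU SBA SBB hflipB hmfAB rAx (negbT rAy)).
have rBx : rB x by move: (D6A x); rewrite rAx.
rewrite setUC.
case rBy: (rB y).
  exact: (abs_L1 hEB hEA hrBA DvB DI' valU' SBB rBx rBy).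
exact: (abs_cross hEB hEA hrBA D6B D5B D5A DvB DvA DI' valU' SBB SBA hflipA hmfBA rBx (negbT rBy)).
Qed.

End Final.

Theorem theorem3p5 (R : realType) (TA TB : finType)
    (eA : rel TA) (eB : rel TB) (a : TA) (b : TB) :
  simple_graph eA -> simple_graph eB ->
  bunkbed R eA -> bunkbed R eB ->
  bunkbed R (glue_rel eA eB a b).
Proof.
move=> [_ irrA] _ bbA bbB mu hval hsym x y.
exact: (final_main irrA bbA bbB hval hsym x y).
Qed.
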